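(* Let $F:\mathbb{R}^{n+m}\to\mathbb{R}^m$ and $g:\mathbb{R}^{n+m}\to\mathbb{R}^l$ be twice continuously differentiable, assume each component $g_i(x,\cdot)$ is concave in $y$ for every $x$, and assume $F$ is uniformly strongly monotone with respect to $y$ (i.e. there is $c>0$ with $(F(x,y)-F(x,y'))^T(y-y')\ge c\|y-y'\|^2$ for all $x,y,y'$). Let $(\theta_r)_{r>0}$ be a family satisfying conditions (i)–(iv) below. Then for every $r>0$ and every feasible point $(x,y,z,\lambda,e)$ of the relaxed problem $(P_r)$, the Jacobian of the equality constraints $$F(x,y)-\nabla_y g(x,y)^T\lambda=0,\qquad g(x,y)-z=0,\qquad \theta_r(\lambda_i)+\theta_r(z_i)+e_i-1=0\ (i=1,\dots,l)$$ with respect to the variables $(y,z,\lambda)$ (a square matrix of order $m+2l$) is nonsingular.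
   Context: The family $(\theta_r)_{r>0}$, $\theta_r:\mathbb{R}_+\to[0,1]$, satisfies: (i) for each $r>0$, $\theta_r$ is nondecreasing, strictly concave and continuously differentiable; (ii) $\theta_r(0)=0$ for all $r>0$; (iii) for every $x>0$, $\lim_{r\to 0}\theta_r(x)=1$; (iv) $\lim_{r\to0}\theta_r'(0)>0$. Let $\mathcal{X}\subset\mathbb{R}^n$ be nonempty and compact and $f:\mathbb{R}^{n+m}\to\mathbb{R}$ twice continuously differentiable. For $r>0$ the relaxed problem $(P_r)$ is: minimize $f(x,y)$ over $x\in\mathcal{X}$, $y\in\mathbb{R}^m$, $z\in\mathbb{R}^l_+$, $\lambda\in\mathbb{R}^l_+$, $e\in\mathbb{R}^l_+$ subject to $F(x,y)-\nabla_y g(x,y)^T\lambda=0$, $g(x,y)=z$, and $\theta_r(\lambda_i)+\theta_r(z_i)+e_i=1$ for all $i\in\{1,\dots,l\}$. Here $\nabla_y g(x,y)$ denotes the $l\times m$ Jacobian of $g$ with respect to $y$. *)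

(* Defs.v *)
From HB Require Import structures.
From mathcomp Require Import all_boot all_order all_algebra.
From mathcomp Require Import all_classical all_reals all_analysis.
Set Implicit Arguments. Unset Strict Implicit. Unset Printing Implicit Defensive.
Import Order.TTheory GRing.Theory Num.Theory.
Import numFieldNormedType.Exports.
Local Open Scope ring_scope.
Local Open Scope classical_set_scope.

Definition C1 (R : realType) p q (f : 'rV[R]_p -> 'rV[R]_q) : Prop :=
  (forall a, differentiable f a) /\ continuous (jacobian f).

Definition C2 (R : realType) p q (f : 'rV[R]_p -> 'rV[R]_q) : Prop :=
  C1 f /\ C1 (fun a => mxvec (jacobian f a)).

Definition dotv (R : realType) k (u v : 'rV[R]_k) : R := \sum_(i < k) u 0 i * v 0 i.
Definition sqnorm (R : realType) k (u : 'rV[R]_k) : R := \sum_(i < k) u 0 i ^+ 2.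

(* partial Jacobian nabla_y g(x,y) in the paper's convention: an l x m matrix,
   row i = gradient of g_i(x,.) at y.  (mathcomp's jacobian is the transpose.) *)
Definition Dy (R : realType) n m l (g : 'rV[R]_(n + m) -> 'rV[R]_l)
  (x : 'rV[R]_n) (y : 'rV[R]_m) : 'M[R]_(l, m) :=
  (jacobian (fun y' => g (row_mx x y')) y)^T.

Definition constr (R : realType) n m l
  (F : 'rV[R]_(n + m) -> 'rV[R]_m) (g : 'rV[R]_(n + m) -> 'rV[R]_l)
  (th : R -> R) (x : 'rV[R]_n) (e : 'rV[R]_l)
  (w : 'rV[R]_(m + (l + l))) : 'rV[R]_(m + (l + l)) :=
  let y := lsubmx w in
  let z := lsubmx (rsubmx w) in
  let la := rsubmx (rsubmx w) in
  row_mx (F (row_mx x y) - la *m Dy g x y)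
    (row_mx (g (row_mx x y) - z)
            (\row_i (th (la 0 i) + th (z 0 i) + e 0 i - 1))).

Definition feasible (R : realType) n m l (X : set 'rV[R]_n)
  (F : 'rV[R]_(n + m) -> 'rV[R]_m) (g : 'rV[R]_(n + m) -> 'rV[R]_l)
  (th : R -> R) (x : 'rV[R]_n) (y : 'rV[R]_m) (z la e : 'rV[R]_l) : Prop :=
  [/\ X x, (forall i, 0 <= z 0 i), (forall i, 0 <= la 0 i) & (forall i, 0 <= e 0 i)] /\
  [/\ F (row_mx x y) - la *m Dy g x y = 0,
      g (row_mx x y) = z &
      forall i, th (la 0 i) + th (z 0 i) + e 0 i = 1].

(* Main.v *)
Require Import Defs.
From HB Require Import structures.
From mathcomp Require Import all_boot all_order all_algebra.
From mathcomp Require Import all_classical all_reals all_analysis.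
From mathcomp Require Import lra ring.
Import Order.TTheory GRing.Theory Num.Theory.
Import numFieldNormedType.Exports.
Local Open Scope ring_scope.
Local Open Scope classical_set_scope.

Section Diff.
Variable R : realType.
Context {V : normedModType R}.

Lemma differentiable_mx p q (f : V -> 'M[R]_(p,q)) a :
  (forall i j, differentiable (fun x => f x i j) a) -> differentiable f a.
Proof.
move=> H.
have -> : f = \sum_(i < p) \sum_(j < q) (fun x => f x i j *: delta_mx i j).
  apply/funext => x; rewrite fct_sumE (matrix_sum_delta (f x)).
  by apply: eq_bigr => i _; rewrite fct_sumE.
apply: differentiable_sum => i; apply: differentiable_sum => j.
exact: differentiableZl.
Qed.

Lemma dentry p q (f : V -> 'M[R]_(p,q)) a i j :
  differentiable f a -> differentiable (fun x => f x i j) a.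
Proof.
move=> df; have -> : (fun x => f x i j) = (fun N : 'M[R]_(p,q) => N i j) \o f by [].
by apply: differentiable_comp => //; apply: differentiable_coord.
Qed.

Lemma dmul p q r (P : V -> 'M[R]_(p,q)) (Q : V -> 'M[R]_(q,r)) a :
  differentiable P a -> differentiable Q a ->
  differentiable (fun w => P w *m Q w) a.
Proof.
move=> dP dQ; apply: differentiable_mx => i j.
have -> : (fun w => (P w *m Q w) i j) = \sum_(k < q) (fun w => P w i k * Q w k j).
  by apply/funext => w; rewrite fct_sumE mxE.
apply: differentiable_sum => k.
by apply: differentiableM; apply: dentry.
Qed.

Lemma dtr p q (Q : V -> 'M[R]_(p,q)) a :
  differentiable Q a -> differentiable (fun w => (Q w)^T) a.
Proof.
move=> dQ; apply: differentiable_mx => i j.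
have -> : (fun w => (Q w)^T i j) = (fun w => Q w j i).
  by apply/funext => w; rewrite mxE.
exact: dentry.
Qed.

Lemma drowmx p q1 q2 (P : V -> 'M[R]_(p,q1)) (Q : V -> 'M[R]_(p,q2)) a :
  differentiable P a -> differentiable Q a ->
  differentiable (fun w => row_mx (P w) (Q w)) a.
Proof.
move=> dP dQ; apply: differentiable_mx => i j.
rewrite -[j](@splitK q1 q2); case: (fintype.split j) => k /=.
  have -> : (fun w => row_mx (P w) (Q w) i (lshift q2 k)) = (fun w => P w i k).
    by apply/funext => w; rewrite row_mxEl.
  exact: dentry.
have -> : (fun w => row_mx (P w) (Q w) i (rshift q1 k)) = (fun w => Q w i k).
  by apply/funext => w; rewrite row_mxEr.
exact: dentry.
Qed.

Lemma dvecmx p q (P : V -> 'rV[R]_(p * q)) a :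
  differentiable P a -> differentiable (fun w => (vec_mx (P w) : 'M[R]_(p,q))) a.
Proof.
move=> dP; apply: differentiable_mx => i j.
have -> : (fun w => (vec_mx (P w) : 'M[R]_(p,q)) i j) = (fun w => P w 0 (mxvec_index i j)).
  by apply/funext => w; rewrite -mxvecE vec_mxK.
exact: dentry.
Qed.

Lemma dlsub p q1 q2 (P : V -> 'M[R]_(p,q1 + q2)) a :
  differentiable P a -> differentiable (fun w => lsubmx (P w)) a.
Proof.
move=> dP; have -> : (fun w => lsubmx (P w)) = lsubmx \o P by [].
by apply: differentiable_comp => //; apply: differentiable_lsubmx.
Qed.

Lemma drsub p q1 q2 (P : V -> 'M[R]_(p,q1 + q2)) a :
  differentiable P a -> differentiable (fun w => rsubmx (P w)) a.
Proof.
move=> dP; have -> : (fun w => rsubmx (P w)) = rsubmx \o P by [].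
by apply: differentiable_comp => //; apply: differentiable_rsubmx.
Qed.


Lemma dB (f h : V -> R) a : differentiable f a -> differentiable h a ->
  differentiable (fun w => f w - h w) a.
Proof. by move=> df dh; have := differentiableB df dh; exact. Qed.

Lemma dBmx p q (f h : V -> 'M[R]_(p,q)) a : differentiable f a -> differentiable h a ->
  differentiable (fun w => f w - h w) a.
Proof. by move=> df dh; have := differentiableB df dh; exact. Qed.

Lemma dD (f h : V -> R) a : differentiable f a -> differentiable h a ->
  differentiable (fun w => f w + h w) a.
Proof. by move=> df dh; have := differentiableD df dh; exact. Qed.

Lemma dcompo (W U : normedModType R) (f : V -> W) (h : W -> U) a :
  differentiable f a -> (forall b, differentiable h b) ->
  differentiable (fun w => h (f w)) a.
Proof. by move=> df dh; have := differentiable_comp df (dh (f a)); exact. Qed.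

End Diff.

Lemma did (R : realType) p q (a : 'M[R]_(p,q)) : differentiable (fun w : 'M[R]_(p,q) => w) a.
Proof. by apply: differentiable_mx => i j; apply: differentiable_coord. Qed.


Lemma tangent (R : realType) (p : R -> R) (d T : R) :
  (fun h => h^-1 * (p h - p 0)) @ 0^' --> d ->
  (forall u, 0 < u < 1 -> (1 - u) * p 0 + u * p T <= p (u * T)) ->
  p T <= p 0 + d * T.
Proof.
move=> Hq Hc.
have key : forall h, T != 0 -> 0 < h / T < 1 -> h / T * (p T - p 0) <= p h - p 0.
  move=> h T0 Hu; have := Hc _ Hu; rewrite mulfVK //.
  set u := h / T; move=> H; rewrite mulrBr; lra.
case: (ltgtP T 0) => [Tlt|Tgt|->]; last by rewrite mulr0 addr0.
- have : d <= (p T - p 0) / T.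
    apply: (ler_cvg_to (cvg_dnbhs_at_left Hq) (cvg_cst _)).
    near=> h.
    have h0 : h < 0 by near: h; apply: nbhs_left_lt.
    have hT : T < h by near: h; apply: nbhs_left_gt.
    have Hu : 0 < h / T < 1.
      by rewrite ltr_ndivlMr // ltr_ndivrMr // mul0r mul1r h0 hT.
    have := key h (ltr0_neq0 Tlt) Hu => Hk.
    apply: (le_trans (ler_wnM2l _ Hk)); first by rewrite invr_le0 ltW.
    by rewrite mulrA mulrA mulVf ?ltr0_neq0 // mul1r mulrC.
  by rewrite ler_ndivlMr //; lra.
- have : (p T - p 0) / T <= d.
    apply: (ler_cvg_to (cvg_cst _) (cvg_dnbhs_at_right Hq)).
    near=> h.
    have h0 : 0 < h by near: h; apply: nbhs_right_gt.
    have hT : h < T by near: h; apply: nbhs_right_lt.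
    have Hu : 0 < h / T < 1.
      by rewrite ltr_pdivlMr // ltr_pdivrMr // mul0r mul1r h0 hT.
    have := key h (lt0r_neq0 Tgt) Hu => Hk.
    apply: (le_trans _ (ler_wpM2l _ Hk)); last by rewrite invr_ge0 ltW.
    by rewrite mulrA mulrA mulVf ?lt0r_neq0 // mul1r mulrC.
  by rewrite ler_pdivrMr //; lra.
Unshelve. all: by end_near.
Qed.

Section Spec.
Variable R : realType.
Variables (n m l : nat) (F : 'rV[R]_(n + m) -> 'rV[R]_m) (g : 'rV[R]_(n + m) -> 'rV[R]_l).
Variables (th : R -> R) (x : 'rV[R]_n) (e : 'rV[R]_l).
Hypothesis dF : forall p, differentiable F p.
Hypothesis dg : forall p, differentiable g p.
Hypothesis dJ : forall p, differentiable (fun q => mxvec (jacobian g q)) p.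
Hypothesis dth : forall t : R, differentiable th t.

Local Notation G := (fun y' => g (row_mx x y')).

Lemma drowx (a : 'rV[R]_m) : differentiable (fun y' => row_mx x y') a.
Proof. by apply: drowmx; [apply: differentiable_cst | apply: did]. Qed.

Lemma drowxE (a u : 'rV[R]_m) : 'd (fun y' => row_mx x y') a u = row_mx 0 u.
Proof.
rewrite -deriveE; last exact: drowx.
rewrite /derive; apply: cvg_lim => //; apply: cvg_near_cst; near=> h.
have h0 : h != 0 by near: h; apply: nbhs_dnbhs_neq.
by rewrite /= opp_row_mx add_row_mx subrr addrK scale_row_mx scaler0 scalerA mulVf // scale1r.
Unshelve. all: by end_near.
Qed.

Lemma dG y' : differentiable G y'.
Proof. by apply: dcompo => //; apply: drowx. Qed.

Lemma DGE y' u : 'D_u G y' = row_mx 0 u *m jacobian g (row_mx x y').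
Proof.
rewrite deriveE; last exact: dG.
change ('d (g \o (fun y' => row_mx x y')) y' u = row_mx 0 u *m 'J g (row_mx x y')).
by rewrite diff_comp //= ?drowxE /jacobian ?mul_rV_lin1 //; apply: drowx.
Qed.

Lemma JGE y' : jacobian G y' = row_mx 0 1%:M *m jacobian g (row_mx x y').
Proof.
apply/row_matrixP => i; rewrite !rowE mulmxA -deriveEjacobian; last exact: dG.
by rewrite DGE mul_mx_row mulmx0 mulmx1.
Qed.

Lemma dPX (w : 'rV[R]_(m + (l + l))) : differentiable (fun w => row_mx x (lsubmx w)) w.
Proof. by apply: drowmx; [apply: differentiable_cst | apply: dlsub; apply: did]. Qed.

Lemma dconstr w : differentiable (constr F g th x e) w.
Proof.
have -> : constr F g th x e = fun w =>
  row_mx (F (row_mx x (lsubmx w)) - rsubmx (rsubmx w) *m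
     (row_mx 0 1%:M *m vec_mx (mxvec (jacobian g (row_mx x (lsubmx w)))))^T)
   (row_mx (g (row_mx x (lsubmx w)) - lsubmx (rsubmx w))
      (\row_i (th (rsubmx (rsubmx w) 0 i) + th (lsubmx (rsubmx w) 0 i) + e 0 i - 1))).
  by apply/funext => w'; rewrite /constr /Dy JGE mxvecK.
apply: drowmx.
  apply: dBmx; first by apply: dcompo => //; apply: dPX.
  apply: dmul; first by apply: drsub; apply: drsub; apply: did.
  apply: dtr; apply: dmul; first exact: differentiable_cst.
  by apply: dvecmx; apply: (@dcompo R _ _ _ _ (fun q => mxvec (jacobian g q))); [exact: dPX | exact: dJ].
apply: drowmx.
  apply: dBmx; first by apply: dcompo => //; apply: dPX.
  by apply: dlsub; apply: drsub; apply: did.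
apply: differentiable_mx => i j.
have -> : (fun w : 'rV[R]_(m + (l + l)) => (\row_k (th (rsubmx (rsubmx w) 0 k) + th (lsubmx (rsubmx w) 0 k)
    + e 0 k - 1) : 'rV[R]_l) i j) =
   (fun w : 'rV[R]_(m + (l + l)) => th (rsubmx (rsubmx w) 0 j) + th (lsubmx (rsubmx w) 0 j) + e 0 j - 1).
  by apply/funext => w'; rewrite mxE.
apply: dB; last exact: differentiable_cst.
apply: dD; last exact: differentiable_cst.
apply: dD; apply: dcompo => //; apply: dentry.
  by apply: drsub; apply: drsub; apply: did.
by apply: dlsub; apply: drsub; apply: did.
Qed.

Lemma cvg_coord p q (f : R -> 'M[R]_(p,q)) (L : 'M[R]_(p,q)) i j :
  f @ 0^' --> L -> (fun h => f h i j) @ 0^' --> L i j.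
Proof. by move=> Hf; apply: (@continuous_cvg _ _ _ _ _ f (fun M : 'M[R]_(p,q) => M i j) L) => //; apply: coord_continuous. Qed.

Hypothesis conc : forall (y y' : 'rV[R]_m) (t : R) (i : 'I_l), 0 <= t <= 1 ->
     t * g (row_mx x y) 0 i + (1 - t) * g (row_mx x y') 0 i
       <= g (row_mx x (t *: y + (1 - t) *: y')) 0 i.

Lemma psi_quot (a y : 'rV[R]_m) i s :
  (fun t => t^-1 * ((fun t => (fun t' => G (t' *: a + y) 0 i) (t + s)) t
                   - (fun t => (fun t' => G (t' *: a + y) 0 i) (t + s)) 0))
   @ 0^' --> ('D_a G (s *: a + y)) 0 i.
Proof.
have H : derivable G (s *: a + y) a by apply: diff_derivable; apply: dG.
have := @cvg_coord _ _ _ _ 0 i H.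
move=> H2; have E : (fun t => t^-1 * (g (row_mx x ((t + s) *: a + y)) 0 i - g (row_mx x ((0 + s) *: a + y)) 0 i)) = (fun h => (h^-1 *: ((G \o shift (s *: a + y)) (h *: a) - g (row_mx x (s *: a + y)))) 0 i).
  by apply/funext => t; rewrite !mxE /= add0r scalerDl addrA.
by rewrite E.
Qed.

Lemma psi_chord (a y : 'rV[R]_m) i s T u : 0 < u < 1 ->
  (1 - u) * (fun t => (fun t' => G (t' *: a + y) 0 i) (t + s)) 0 +
  u * (fun t => (fun t' => G (t' *: a + y) 0 i) (t + s)) T <=
  (fun t => (fun t' => G (t' *: a + y) 0 i) (t + s)) (u * T).
Proof.
move=> /andP[u0 u1] /=.
have := conc ((T + s) *: a + y) ((0 + s) *: a + y) u i.
have u01 : 0 <= u <= 1 by rewrite !ltW.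
move=> /(_ u01).
have -> : u *: ((T + s) *: a + y) + (1 - u) *: ((0 + s) *: a + y) = (u * T + s) *: a + y.
  rewrite !scalerDr !scalerA addrACA -!scalerDl.
  have -> : u * (T + s) + (1 - u) * (0 + s) = u * T + s by ring.
  have -> : u + (1 - u) = 1 by ring.
  by rewrite scale1r.
by rewrite addrC.
Qed.

Lemma psi_mono (a y : 'rV[R]_m) i h : 0 < h ->
  ('D_a G (h *: a + y)) 0 i <= ('D_a G y) 0 i.
Proof.
move=> h0.
have t0 := @tangent R _ _ h (psi_quot a y i 0) (@psi_chord a y i 0 h).
have t1 := @tangent R _ _ (- h) (psi_quot a y i h) (@psi_chord a y i h (- h)).
move: t0 t1 => /=; rewrite !add0r addNr scale0r add0r addr0 mulrN.
set d0 := ('D_a G y) 0 i; set dh := ('D_a G (h *: a + y)) 0 i.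
set p0 := G y 0 i; set ph := G (h *: a + y) 0 i => t0 t1.
have : dh * h <= d0 * h by lra.
by rewrite ler_pM2r.
Qed.

End Spec.



Section Hlp.
Variable R : realType.

Lemma dotvE k (u v : 'rV[R]_k) : (u *m v^T) 0 0 = dotv u v.
Proof. by rewrite mxE; apply: eq_bigr => i _; rewrite mxE. Qed.

Lemma dotvBl k (u u' v : 'rV[R]_k) : dotv (u - u') v = dotv u v - dotv u' v.
Proof. by rewrite /dotv -sumrB; apply: eq_bigr => i _; rewrite !mxE mulrBl. Qed.

Lemma dotvDl k (u u' v : 'rV[R]_k) : dotv (u + u') v = dotv u v + dotv u' v.
Proof. by rewrite /dotv -big_split; apply: eq_bigr => i _; rewrite !mxE mulrDl. Qed.

Lemma dotvZl k h (u v : 'rV[R]_k) : dotv (h *: u) v = h * dotv u v.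
Proof. by rewrite /dotv mulr_sumr; apply: eq_bigr => i _; rewrite !mxE mulrA. Qed.

Lemma dotvZr k h (u v : 'rV[R]_k) : dotv u (h *: v) = h * dotv u v.
Proof. by rewrite /dotv mulr_sumr; apply: eq_bigr => i _; rewrite !mxE mulrCA. Qed.

Lemma sqnormZ k h (u : 'rV[R]_k) : sqnorm (h *: u) = h ^+ 2 * sqnorm u.
Proof. by rewrite /sqnorm mulr_sumr; apply: eq_bigr => i _; rewrite !mxE exprMn. Qed.

Lemma dotv_le k (u v v' : 'rV[R]_k) : (forall i, 0 <= u 0 i) ->
  (forall i, v 0 i <= v' 0 i) -> dotv u v <= dotv u v'.
Proof. by move=> u0 vv; apply: ler_sum => i _; apply: ler_wpM2l. Qed.

Lemma lim_mulVr (b : R) : (fun h : R => h^-1 * (h * b)) @ 0^' --> b.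
Proof.
apply: cvg_near_cst; near=> h.
have h0 : h != 0 by near: h; apply: nbhs_dnbhs_neq.
by rewrite mulrA mulVf // mul1r.
Unshelve. all: by end_near.
Qed.

Lemma lim_uniq (f : R -> R) (a b : R) : f @ (0:R)^' --> a -> f @ (0:R)^' --> b -> a = b.
Proof.
move=> Ha Hb.
have E1 : lim (f @ 0^') = a by apply: cvg_lim => //.
have E2 : lim (f @ 0^') = b by apply: cvg_lim => //.
by rewrite -E1 -E2.
Qed.

Lemma th_quot (th : R -> R) t c : differentiable th t ->
  (fun h => h^-1 * (th (h * c + t) - th t)) @ 0^' --> c * derive1 th t.
Proof.
move=> dt; have H : derivable th t c by apply: diff_derivable.
have E : 'D_c th t = c * derive1 th t by rewrite deriveE // diff1E.
rewrite -E; exact: H.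
Qed.

Lemma quotE (f : R -> R) a :
  (fun h : R => h^-1 *: ((f \o shift a) (h *: 1) - f a)) =
  (fun h => h^-1 * ((fun t => f (t + a)) h - (fun t => f (t + a)) 0)).
Proof. by apply/funext => h /=; rewrite add0r [_%:A]mulr1. Qed.

Lemma theta_pos (th : R -> R) (a : R) : 0 <= a ->
  (forall a b, 0 <= a -> a <= b -> th a <= th b) ->
  (forall a b t, 0 <= a -> 0 <= b -> a != b -> 0 < t < 1 ->
            t * th a + (1 - t) * th b < th (t * a + (1 - t) * b)) ->
  derivable th a 1 -> 0 < th^`() a.
Proof.
move=> a0 mono conc da.
have Hq : (fun h => h^-1 * ((fun t => th (t + a)) h - (fun t => th (t + a)) 0)) @ 0^' --> 'D_1 th a.
  by rewrite -quotE; exact: da.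
have tg := @tangent _ _ _ 2 Hq.
have /tg : forall u, 0 < u < 1 -> (1 - u) * th (0 + a) + u * th (2 + a) <= th (u * 2 + a).
  move=> u Hu; apply/ltW.
  have -> : u * 2 + a = u * (2 + a) + (1 - u) * a by ring.
  rewrite add0r addrC; apply: conc => //; first lra.
  by rewrite gt_eqF //; lra.
move=> H; rewrite add0r in H; rewrite derive1E.
rewrite ltNge; apply/negP => dle.
have H1 : th (2 + a) <= th a.
  by apply: (le_trans H); rewrite gerDl; apply: mulr_le0_ge0 => //.
have H2 := conc (2 + a) a (2^-1) ltac:(lra) a0 ltac:(rewrite gt_eqF //; lra) ltac:(lra).
have H3 : th (2^-1 * (2 + a) + (1 - 2^-1) * a) <= th (2 + a).
  apply: mono; lra.
lra.
Qed.

End Hlp.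

Section Hlp2.
Variable R : realType.

Lemma dotv_lsub k p (A B : 'rV[R]_(k + p)) (h : R) (u : 'rV[R]_k) :
  dotv (lsubmx (h *: (A - B))) u = h * (dotv (lsubmx A) u - dotv (lsubmx B) u).
Proof.
rewrite /dotv -sumrB mulr_sumr; apply: eq_bigr => j _; rewrite !mxE; ring.
Qed.

Lemma cont_dotlsub k p (u : 'rV[R]_k) : continuous (fun M : 'rV[R]_(k + p) => dotv (lsubmx M) u).
Proof.
move=> M; apply: differentiable_continuous.
have -> : (fun M : 'rV[R]_(k + p) => dotv (lsubmx M) u) = (fun M => (lsubmx M *m u^T) 0 0).
  by apply/funext => N; rewrite dotvE.
apply: dentry; apply: dmul; last exact: differentiable_cst.
by apply: dlsub; apply: did.
Qed.

Lemma dDmx (V : normedModType R) p q (f h : V -> 'M[R]_(p,q)) a : differentiable f a -> differentiable h a ->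
  differentiable (fun w => f w + h w) a.
Proof. by move=> df dh; have := differentiableD df dh; exact. Qed.

Lemma dscal k (u : 'rV[R]_k) (t : R) : differentiable (fun h : R => h *: u) t.
Proof.
apply: differentiableZl; apply/derivable1_diffP; exact: derivable_id.
Qed.

End Hlp2.



Theorem lemma3 (R : realType) (n m l : nat) (X : set 'rV[R]_n)
  (F : 'rV[R]_(n + m) -> 'rV[R]_m) (g : 'rV[R]_(n + m) -> 'rV[R]_l)
  (theta : R -> R -> R) :
  compact X -> X !=set0 ->
  C2 F -> C2 g ->
  (* each g_i(x,.) concave in y *)
  (forall (x : 'rV[R]_n) (y y' : 'rV[R]_m) (t : R) (i : 'I_l), 0 <= t <= 1 ->
     t * g (row_mx x y) 0 i + (1 - t) * g (row_mx x y') 0 i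
       <= g (row_mx x (t *: y + (1 - t) *: y')) 0 i) ->
  (* F uniformly strongly monotone in y *)
  (exists c : R, 0 < c /\ forall (x : 'rV[R]_n) (y y' : 'rV[R]_m),
     c * sqnorm (y - y') <= dotv (F (row_mx x y) - F (row_mx x y')) (y - y')) ->
  (* (i) *)
  (forall r : R, 0 < r ->
     [/\ (forall a, 0 <= a -> 0 <= theta r a <= 1),
         (forall a b, 0 <= a -> a <= b -> theta r a <= theta r b),
         (forall a b t, 0 <= a -> 0 <= b -> a != b -> 0 < t < 1 ->
            t * theta r a + (1 - t) * theta r b < theta r (t * a + (1 - t) * b)),
         (forall a, derivable (theta r) a 1) &
         continuous (derive1 (theta r))]) ->
  (* (ii) *)
  (forall r : R, 0 < r -> theta r 0 = 0) ->
  (* (iii) *)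
  (forall a : R, 0 < a -> (fun r => theta r a) @ 0^'+ --> (1 : R)) ->
  (* (iv) the limit exists (possibly +oo) and is positive *)
  (exists L : \bar R, (0 < L)%E /\ (fun r => ((derive1 (theta r)) 0)%:E) @ 0^'+ --> L) ->
  forall (r : R), 0 < r ->
  forall (x : 'rV[R]_n) (y : 'rV[R]_m) (z la e : 'rV[R]_l),
    feasible X F g (theta r) x y z la e ->
    jacobian (constr F g (theta r) x e) (row_mx y (row_mx z la)) \in unitmx.
Proof.
move=> _ _ [[dF _] _] [[dg _] [dJ _]] conc [c0 [c00 mono]] thP _ _ _ r r0 x y z la e.
move=> [[_ z0 la0 _] [_ _ _]].
have [_ thmono thconc thder _] := thP r r0.
set th := theta r.
have dth : forall t, differentiable th t by move=> t; apply/derivable1_diffP.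
rewrite -row_free_unit; apply: inj_row_free => v Hv.
set w := row_mx y (row_mx z la).
set C := constr F g th x e.
have dC : differentiable C w by apply: dconstr.
set Qf := fun h : R => C (h *: v + w).
have Hq : (fun h => h^-1 *: (Qf h - Qf 0)) @ 0^' --> (0 : 'rV[R]_(m + (l + l))).
  have H : derivable C w v by apply: diff_derivable.
  have D0 : 'D_v C w = 0 by rewrite deriveEjacobian // Hv.
  have E : (fun h => h^-1 *: (Qf h - Qf 0)) = (fun h => h^-1 *: ((C \o shift w) (h *: v) - C w)).
    by apply/funext => h; rewrite /Qf scale0r add0r.
  by rewrite E -D0; exact: H.
set a := lsubmx v; set b := lsubmx (rsubmx v); set c := rsubmx (rsubmx v).
have vE : v = row_mx a (row_mx b c) by rewrite !hsubmxK.
clearbody a b c.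
have CE : forall h, Qf h = row_mx (F (row_mx x (h *: a + y)) - (h *: c + la) *m Dy g x (h *: a + y))
   (row_mx (g (row_mx x (h *: a + y)) - (h *: b + z))
     (\row_i (th ((h *: c + la) 0 i) + th ((h *: b + z) 0 i) + e 0 i - 1))).
  move=> h; rewrite /Qf {1}vE /w !scale_row_mx !add_row_mx /C /constr. by rewrite !row_mxKr !row_mxKl.
have B3 : forall i, c 0 i * derive1 th (la 0 i) + b 0 i * derive1 th (z 0 i) = 0.
  move=> i.
  have H := @cvg_coord R _ _ _ _ 0 (rshift m (rshift l i)) Hq.
  have E : (fun h => (h^-1 *: (Qf h - Qf 0)) 0 (rshift m (rshift l i))) =
     (fun h => h^-1 * (th (h * c 0 i + la 0 i) - th (la 0 i)) + h^-1 * (th (h * b 0 i + z 0 i) - th (z 0 i))).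
    apply/funext => h; rewrite !CE !opp_row_mx !add_row_mx !scale_row_mx !row_mxEr !mxE !mul0r !add0r.
    ring.
  rewrite E mxE in H.
  have H2 : (fun h => h^-1 * (th (h * c 0 i + la 0 i) - th (la 0 i)) + h^-1 * (th (h * b 0 i + z 0 i) - th (z 0 i))) @ 0^' --> c 0 i * derive1 th (la 0 i) + b 0 i * derive1 th (z 0 i).
    by apply: cvgD; apply: th_quot.
  exact: (@lim_uniq R _ _ _ H2 H).
have B2 : 'D_a (fun y' => g (row_mx x y')) y = b.
  apply/rowP => i.
  have H := @cvg_coord R _ _ _ _ 0 (rshift m (lshift l i)) Hq.
  have Hd : derivable (fun y' => g (row_mx x y')) y a by apply: diff_derivable; apply: dG.
  have H1 := @cvg_coord R _ _ _ _ 0 i Hd.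
  have E : (fun h => (h^-1 *: (Qf h - Qf 0)) 0 (rshift m (lshift l i))) =
    (fun h => (h^-1 *: (((fun y' => g (row_mx x y')) \o shift y) (h *: a) - g (row_mx x y))) 0 i
       - h^-1 * (h * b 0 i)).
    apply/funext => h; rewrite !CE !opp_row_mx !add_row_mx !scale_row_mx row_mxEr row_mxEl !mxE /=.
    rewrite !mul0r !add0r scale0r add0r; ring.
  rewrite E mxE in H.
  have H2 : (fun h => (h^-1 *: (((fun y' => g (row_mx x y')) \o shift y) (h *: a) - g (row_mx x y))) 0 i
       - h^-1 * (h * b 0 i)) @ 0^' --> ('D_a (fun y' => g (row_mx x y')) y) 0 i - b 0 i.
    by apply: cvgB; [exact: H1 | exact: lim_mulVr].
  by have /eqP := @lim_uniq R _ _ _ H2 H; rewrite subr_eq0 => /eqP.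
set G := fun y' => g (row_mx x y').
have Dy_dot : forall (u : 'rV[R]_l) y', dotv (u *m Dy g x y') a = dotv u ('D_a G y').
  move=> u y'; rewrite -!dotvE /Dy -mulmxA -trmx_mul -deriveEjacobian //.
  exact: dG.
have LE : forall h, dotv (lsubmx (Qf h)) a =
    dotv (F (row_mx x (h *: a + y))) a - (h * dotv c ('D_a G (h *: a + y)) + dotv la ('D_a G (h *: a + y))).
  by move=> h; rewrite CE row_mxKl dotvBl Dy_dot dotvDl dotvZl.
have HS : (fun h => h^-1 * (dotv (lsubmx (Qf h)) a - dotv (lsubmx (Qf 0)) a)) @ 0^' --> (0 : R).
  have := @continuous_cvg _ _ _ _ _ _ (fun M : 'rV[R]_(m + (l + l)) => dotv (lsubmx M) a) _ (cont_dotlsub _ _ _ _ _) Hq.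
  have -> : dotv (lsubmx (0 : 'rV[R]_(m + (l + l)))) a = 0.
    by rewrite /dotv big1 // => j _; rewrite !mxE mul0r.
  have E : (fun h => h^-1 * (dotv (lsubmx (Qf h)) a - dotv (lsubmx (Qf 0)) a)) =
     (fun M : 'rV[R]_(m + (l + l)) => dotv (lsubmx M) a) \o (fun h => h^-1 *: (Qf h - Qf 0)).
    by apply/funext => h /=; rewrite dotv_lsub.
  by rewrite E; apply; apply: filter_on_Filter.
have key : forall h, 0 < h -> c0 * sqnorm a - dotv c ('D_a G (h *: a + y)) <=
    h^-1 * (dotv (lsubmx (Qf h)) a - dotv (lsubmx (Qf 0)) a).
  move=> h h0; rewrite !LE scale0r !add0r mul0r add0r.
  have M1 := mono x (h *: a + y) y; rewrite addrK sqnormZ dotvZr dotvBl in M1.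
  have P1 : dotv la ('D_a G (h *: a + y)) <= dotv la ('D_a G y).
    apply: dotv_le => // i; exact: (@psi_mono R n m l g x dg (conc x) a y i h h0).
  rewrite ler_pdivlMl //.
  move: M1 P1.
  set S := sqnorm a; set E1 := dotv c _; set P := dotv la _; set P0 := dotv la _.
  set D1 := dotv (F _) a; set D0 := dotv (F _) a.
  move=> M1 P1; nra.
have rc : (fun h => dotv c ('D_a G (h *: a + y))) @ 0^'+ --> dotv c ('D_a G y).
  have E : (fun h => dotv c ('D_a G (h *: a + y))) = (fun h : R =>
      (c *m (row_mx 0 a *m vec_mx (mxvec (jacobian g (row_mx x (h *: a + y)))))^T) 0 0).
    by apply/funext => h; rewrite DGE // mxvecK dotvE.
  have d0 : differentiable (fun h : R =>
      (c *m (row_mx 0 a *m vec_mx (mxvec (jacobian g (row_mx x (h *: a + y)))))^T) 0 0) 0.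
    apply: dentry; apply: dmul; first exact: differentiable_cst.
    apply: dtr; apply: dmul; first exact: differentiable_cst.
    apply: dvecmx.
    have Hin : differentiable (fun t : R => row_mx x (t *: a + y)) 0.
      apply: drowmx; first exact: differentiable_cst.
      by apply: dDmx; [exact: dscal | exact: differentiable_cst].
    exact: (@dcompo R _ _ _ _ _ _ Hin dJ).
  have H := differentiable_continuous d0.
  have H' : (fun h => dotv c ('D_a G (h *: a + y))) @ (0 : R) --> dotv c ('D_a G (0 *: a + y)).
    rewrite E; have -> : dotv c ('D_a G (0 *: a + y)) = (c *m (row_mx 0 a *m vec_mx (mxvec (jacobian g (row_mx x (0 *: a + y)))))^T) 0 0 by rewrite DGE // mxvecK dotvE.
    exact: H.
  rewrite scale0r add0r in H'.
  exact: cvg_within_filter H'.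
have rlim : c0 * sqnorm a - dotv c ('D_a G y) <= 0.
  apply: (ler_cvg_to (cvgB (cvg_cst (c0 * sqnorm a)) rc) (cvg_dnbhs_at_right HS)).
  near=> h; apply: key.
  by near: h; apply: nbhs_right_gt.
rewrite B2 in rlim.
have thp : forall t, 0 <= t -> 0 < derive1 th t.
  by move=> t t0; apply: theta_pos => //; apply: thder.
have cb : dotv c b <= 0.
  apply: sumr_le0 => i _.
  move: (thp _ (la0 i)) (thp _ (z0 i)) (B3 i).
  set P := derive1 th _; set Q := derive1 th _ => p q H.
  have H2 : c 0 i * b 0 i * P + b 0 i * b 0 i * Q = b 0 i * (c 0 i * P + b 0 i * Q) by ring.
  rewrite H mulr0 in H2.
  nra.
have S0 : sqnorm a <= 0.
  have : c0 * sqnorm a <= 0 by lra.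
  by rewrite pmulr_rle0.
have a0 : a = 0.
  have Sge : 0 <= sqnorm a by apply: sumr_ge0 => i _; exact: sqr_ge0.
  have S0' : sqnorm a = 0 by apply/eqP; rewrite eq_le S0 Sge.
  apply/rowP => i; rewrite mxE.
  have := psumr_eq0P (fun j _ => sqr_ge0 (a 0 j)) S0'; move=> /(_ i) /(_ isT).
  by move/eqP; rewrite sqrf_eq0 => /eqP.
have b0 : b = 0 by rewrite -B2 a0 derive0.
have cz : c = 0.
  apply/rowP => i; rewrite mxE; have := B3 i; rewrite b0 mxE mul0r addr0 => /eqP.
  rewrite mulf_eq0 => /orP[/eqP//|/eqP H].
  by have := thp _ (la0 i); rewrite H ltxx.
by rewrite vE a0 b0 cz !row_mx0.
Unshelve. all: by end_near.
Qed.
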